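(* Let $n\ge3$. There exists no spherical $(2,2)$-design $C\subset\mathbb{S}^{n-1}$ with $|C|=\binom{n+1}{2}+1$.
   Context: For $n\ge 2$, let $P_i^{(n)}(t)$ be the normalized Gegenbauer polynomials: $P_0^{(n)}=1$, $P_1^{(n)}=t$, and $(i+n-2)P_{i+1}^{(n)}(t)=(2i+n-2)tP_i^{(n)}(t)-iP_{i-1}^{(n)}(t)$ for $i\ge1$. A spherical $(2,2)$-design is a finite nonempty $C\subset\mathbb{S}^{n-1}$ with $\sum_{x,y\in C}P_{2}^{(n)}(\langle x,y\rangle)=\sum_{x,y\in C}P_{4}^{(n)}(\langle x,y\rangle)=0$. *)

(* Defs.v *)
From HB Require Import structures.
From mathcomp Require Import all_boot all_order all_algebra.
From mathcomp Require Import reals.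
Set Implicit Arguments. Unset Strict Implicit. Unset Printing Implicit Defensive.
Import Order.TTheory GRing.Theory Num.Theory.
Local Open Scope ring_scope.

Section Defs.
Variable R : realType.

(* gegen_pair n i t = (P_i^{(n)}(t), P_{i+1}^{(n)}(t)) *)
Fixpoint gegen_pair (n i : nat) (t : R) : R * R :=
  match i with
  | 0%N => (1, t)
  | j.+1 =>
      let: (a, b) := gegen_pair n j t in
      (* a = P_j, b = P_{j+1} = P_i with i = j+1; compute P_{i+1} via
         (i+n-2) P_{i+1} = (2i+n-2) t P_i - i P_{i-1} *)
      (b, ((2 * (j.+1)%:R + n%:R - 2) * t * b - (j.+1)%:R * a)
            / ((j.+1)%:R + n%:R - 2))
  end.

Definition gegen (n i : nat) (t : R) : R := (gegen_pair n i t).1.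

Definition inner (n : nat) (x y : 'rV[R]_n) : R := \sum_(k < n) x 0 k * y 0 k.

(* a finite subset of S^{n-1} is represented by a duplicate-free sequence *)
Definition spherical22design (n : nat) (C : seq 'rV[R]_n) : Prop :=
  [/\ C != [::], uniq C,
      (forall x, x \in C -> inner x x = 1),
      \sum_(x <- C) \sum_(y <- C) gegen n 2 (inner x y) = 0
    & \sum_(x <- C) \sum_(y <- C) gegen n 4 (inner x y) = 0].
End Defs.

(* Main.v *)
Require Import Defs.
From mathcomp Require Import all_boot all_order all_algebra.
From mathcomp Require Import reals.
From mathcomp.algebra_tactics Require Import ring lra.
Set Implicit Arguments. Unset Strict Implicit. Unset Printing Implicit Defensive.
Import Order.TTheory GRing.Theory Num.Theory.
Local Open Scope ring_scope.

From mathcomp Require Import zify.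
Lemma int_contra (n : nat) (z : int) : (3 <= n)%N ->
  16 * n%:Z * z^+2 = (n%:Z-1)^+2 * (n%:Z-2) * (n%:Z+2) -> False.
Proof. move=> h e.
set N := n%:Z in e. have hN : 3 <= N by rewrite /N; lia.
set y := z ^+ 2 in e.
have e2 : N * (N^+3 - 2 * N^+2 - 3 * N + 8 - 16 * y) = 4.
  have h0 : N * (N^+3 - 2 * N^+2 - 3 * N + 8 - 16 * y) - 4 = (N-1)^+2 * (N-2) * (N+2) - 16 * N * y by ring.
  by apply/eqP; rewrite -subr_eq0 h0 e subrr.
set K := (N^+3 - 2 * N^+2 - 3 * N + 8 - 16 * y) in e2.
have hK : K = 1 by nia.
have hN4 : N = 4 by nia.
rewrite /K hN4 in hK. lia.
Qed.

Section Gen.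
Variable R : realType.

Lemma sum_delta m (F : 'I_m -> R) c : \sum_d F d * (c == d)%:R = F c.
Proof.
rewrite (bigD1 c) //= eqxx mulr1 big1 ?addr0 // => d /negPf; rewrite eq_sym => ->.
by rewrite mulr0.
Qed.

Lemma sumsq_eq0 (I : finType) (F : I -> R) : \sum_i F i ^+ 2 = 0 -> forall i, F i = 0.
Proof.
move=> /eqP; rewrite psumr_eq0 => [/allP H i|i _]; last exact: sqr_ge0.
by apply/eqP; rewrite -sqrf_eq0; apply: H; rewrite mem_index_enum.
Qed.

Lemma prod2 m (f g : 'I_m -> R) :
  \sum_a \sum_b f a * g b = (\sum_a f a) * (\sum_b g b).
Proof. by rewrite big_distrl; apply: eq_bigr => a _; rewrite big_distrr. Qed.

Lemma prod4 m (f g h k : 'I_m -> R) :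
  \sum_a \sum_b \sum_c \sum_d f a * g b * h c * k d
  = (\sum_a f a) * (\sum_b g b) * (\sum_c h c) * (\sum_d k d).
Proof.
under eq_bigr => a _ do under eq_bigr => b _ do under eq_bigr => c _ do rewrite -big_distrr.
under eq_bigr => a _ do under eq_bigr => b _ do rewrite -big_distrl -big_distrr.
under eq_bigr => a _ do rewrite -!big_distrl -big_distrr.
by rewrite -!big_distrl.
Qed.

Lemma exch4 m s (F : 'I_s -> 'I_m -> 'I_m -> 'I_m -> 'I_m -> R) :
  \sum_a \sum_b \sum_c \sum_d \sum_i F i a b c d
  = \sum_i \sum_a \sum_b \sum_c \sum_d F i a b c d.
Proof.
symmetry.
rewrite exchange_big /=; apply: eq_bigr => a _.
rewrite exchange_big /=; apply: eq_bigr => b _.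
rewrite exchange_big /=; apply: eq_bigr => c _.
by rewrite exchange_big.
Qed.

Lemma exch2 m s (F : 'I_s -> 'I_m -> 'I_m -> R) :
  \sum_a \sum_b \sum_i F i a b = \sum_i \sum_a \sum_b F i a b.
Proof.
symmetry; rewrite exchange_big /=; apply: eq_bigr => a _.
by rewrite exchange_big.
Qed.

Lemma sumsq2_eq0 m (F : 'I_m -> 'I_m -> R) :
  \sum_a \sum_b F a b ^+ 2 = 0 -> forall a b, F a b = 0.
Proof.
move=> H a; apply: sumsq_eq0.
apply: (psumr_eq0P _ H) => // a' _.
by apply: sumr_ge0 => b _; exact: sqr_ge0.
Qed.

Lemma sumsq4_eq0 m (F : 'I_m -> 'I_m -> 'I_m -> 'I_m -> R) :
  \sum_a \sum_b \sum_c \sum_d F a b c d ^+ 2 = 0 -> forall a b c d, F a b c d = 0.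
Proof.
move=> H a b; apply: sumsq2_eq0.
have H1 := psumr_eq0P _ H.
have H2 := H1 (fun a' _ => ltac:(do 3! (apply: sumr_ge0 => ? _); exact: sqr_ge0)) a isT.
apply: (psumr_eq0P _ H2) => // b' _.
by do 2! (apply: sumr_ge0 => ? _); exact: sqr_ge0.
Qed.
Lemma expand2 m (F G : 'I_m -> 'I_m -> R) k :
  \sum_a \sum_b (F a b - k * G a b) ^+ 2 =
  \sum_a \sum_b F a b ^+ 2 - 2 * k * \sum_a \sum_b F a b * G a b
  + k ^+ 2 * \sum_a \sum_b G a b ^+ 2.
Proof.
rewrite !mulr_sumr -sumrB -big_split /=; apply: eq_bigr => a _.
rewrite !mulr_sumr -sumrB -big_split /=; apply: eq_bigr => b _.
ring.
Qed.

Lemma sum4D m (F G : 'I_m -> 'I_m -> 'I_m -> 'I_m -> R) :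
  \sum_a \sum_b \sum_c \sum_d (F a b c d + G a b c d) =
  \sum_a \sum_b \sum_c \sum_d F a b c d + \sum_a \sum_b \sum_c \sum_d G a b c d.
Proof.
rewrite -big_split; apply: eq_bigr => a _.
rewrite -big_split; apply: eq_bigr => b _.
rewrite -big_split; apply: eq_bigr => c _.
by rewrite -big_split.
Qed.

Lemma sum4Z m (F : 'I_m -> 'I_m -> 'I_m -> 'I_m -> R) k :
  \sum_a \sum_b \sum_c \sum_d (k * F a b c d) =
  k * \sum_a \sum_b \sum_c \sum_d F a b c d.
Proof.
rewrite mulr_sumr; apply: eq_bigr => a _.
rewrite mulr_sumr; apply: eq_bigr => b _.
rewrite mulr_sumr; apply: eq_bigr => c _.
by rewrite mulr_sumr.
Qed.

Lemma sum4_ext m (F G : 'I_m -> 'I_m -> 'I_m -> 'I_m -> R) :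
  (forall a b c d, F a b c d = G a b c d) ->
  \sum_a \sum_b \sum_c \sum_d F a b c d = \sum_a \sum_b \sum_c \sum_d G a b c d.
Proof.
move=> H; apply: eq_bigr => a _; apply: eq_bigr => b _; apply: eq_bigr => c _.
by apply: eq_bigr => d _.
Qed.

Lemma expand4 m (F G : 'I_m -> 'I_m -> 'I_m -> 'I_m -> R) k :
  \sum_a \sum_b \sum_c \sum_d (F a b c d - k * G a b c d) ^+ 2 =
  \sum_a \sum_b \sum_c \sum_d F a b c d ^+ 2
  - 2 * k * \sum_a \sum_b \sum_c \sum_d (F a b c d * G a b c d)
  + k ^+ 2 * \sum_a \sum_b \sum_c \sum_d G a b c d ^+ 2.
Proof.
rewrite (@sum4_ext _ _ (fun a b c d => (F a b c d ^+ 2 + (- (2 * k)) * (F a b c d * G a b c d))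
   + k ^+ 2 * G a b c d ^+ 2)); last by move=> *; ring.
by rewrite sum4D sum4D !sum4Z; ring.
Qed.

Local Notation dl a b := ((a == b)%:R : R).

Definition D m (a b c d : 'I_m) : R := dl a b * dl c d + dl a c * dl b d + dl a d * dl b c.

Lemma contrD m (X : 'I_m -> 'I_m -> 'I_m -> 'I_m -> R) :
  \sum_a \sum_b \sum_c \sum_d (X a b c d * D a b c d) =
  \sum_a \sum_c X a a c c + \sum_a \sum_b X a b a b + \sum_a \sum_b X a b b a.
Proof.
rewrite /D (@sum4_ext _ _ (fun a b c d => (X a b c d * dl a b * dl c d
   + X a b c d * dl a c * dl b d) + X a b c d * dl b c * dl a d)); last by move=> *; ring.
rewrite !sum4D; congr (_ + _ + _).
- apply: eq_bigr => a _.
  under eq_bigr => b _ do under eq_bigr => c _ do rewrite sum_delta.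
  under eq_bigr => b _ do rewrite -big_distrl /=.
  by rewrite sum_delta.
- apply: eq_bigr => a _; apply: eq_bigr => b _.
  under eq_bigr => c _ do rewrite sum_delta.
  by rewrite sum_delta.
- apply: eq_bigr => a _; apply: eq_bigr => b _.
  under eq_bigr => c _ do rewrite sum_delta.
  by rewrite sum_delta.
Qed.

Lemma sum_dl m (a : 'I_m) : \sum_b dl a b = 1.
Proof. by rewrite -[RHS](@sum_delta m (fun _ => 1) a); apply: eq_bigr => b _; rewrite mul1r. Qed.

Lemma sumDD m : \sum_(a < m) \sum_(b < m) \sum_(c < m) \sum_(d < m) (D a b c d ^+ 2) = 3 * (m%:R ^+ 2) + 6 * m%:R :> R.
Proof.
rewrite (@sum4_ext _ _ (fun a b c d => D a b c d * D a b c d)); last by move=> *; rewrite expr2.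
rewrite contrD /D.
have E1 : forall a b : 'I_m, dl a b * dl a b = dl a b.
  by move=> a b; case: (a == b); rewrite ?mulr1 ?mulr0.
have E2 : forall a b : 'I_m, dl b a = dl a b by move=> a b; rewrite eq_sym.
have Ha : forall a b : 'I_m, dl a a * dl b b + dl a b * dl a b + dl a b * dl a b = 1 + 2 * dl a b.
  by move=> a b; rewrite !eqxx E1 /=; ring.
have Hb : forall a b : 'I_m, dl a b * dl a b + dl a a * dl b b + dl a b * dl b a = 1 + 2 * dl a b.
  by move=> a b; rewrite !eqxx E2 E1 /=; ring.
have Hc : forall a b : 'I_m, dl a b * dl b a + dl a b * dl b a + dl a a * dl b b = 1 + 2 * dl a b.
  by move=> a b; rewrite !eqxx E2 E1 /=; ring.
have S : \sum_(a < m) \sum_(b < m) (1 + 2 * dl a b) = m%:R ^+ 2 + 2 * m%:R :> R.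
  rewrite (eq_bigr (fun a : 'I_m => m%:R + 2)); last first.
    by move=> a _; rewrite big_split /= -mulr_sumr sum_dl sumr_const card_ord mulr1.
  rewrite sumr_const card_ord. by rewrite -mulr_natr; ring.
under eq_bigr => a _ do under eq_bigr => b _ do rewrite Ha.
under [X in _ + X + _]eq_bigr => a _ do under eq_bigr => b _ do rewrite Hb.
under [X in _ + X]eq_bigr => a _ do under eq_bigr => b _ do rewrite Hc.
rewrite S; ring.
Qed.

Lemma contrD_fg m (f g : 'I_m -> R) :
  \sum_a \sum_b \sum_c \sum_d (f a * f b * g c * g d * D a b c d) =
  (\sum_a f a ^+ 2) * (\sum_a g a ^+ 2) + 2 * (\sum_a f a * g a) ^+ 2.
Proof.
rewrite contrD.
rewrite (_ : \sum_a \sum_c f a * f a * g c * g c = (\sum_a f a ^+ 2) * (\sum_a g a ^+ 2)); last first.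
  by rewrite -prod2; apply: eq_bigr => a _; apply: eq_bigr => c _; ring.
rewrite (_ : \sum_a \sum_b f a * f b * g a * g b = (\sum_a f a * g a) ^+ 2); last first.
  by rewrite expr2 -prod2; apply: eq_bigr => a _; apply: eq_bigr => c _; ring.
rewrite (_ : \sum_a \sum_b f a * f b * g b * g a = (\sum_a f a * g a) ^+ 2); last first.
  by rewrite expr2 -prod2; apply: eq_bigr => a _; apply: eq_bigr => c _; ring.
ring.
Qed.
Lemma sum_rw m (k : 'I_m) (H F G : 'I_m -> R) al be ga de :
  \sum_j H j * (dl k j - al - (F j - ga) * be - de * G j) =
  H k - al * (\sum_j H j) - ((\sum_j H j * F j) - ga * (\sum_j H j)) * be
  - de * (\sum_j H j * G j).
Proof.
rewrite (eq_bigr (fun j => H j * dl k j - al * H j - (H j * F j - ga * H j) * be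
   - de * (H j * G j))); last by move=> j _; ring.
rewrite !sumrB sum_delta -!mulr_sumr -mulr_suml sumrB -mulr_sumr.
by [].
Qed.
End Gen.


Arguments D {R m} a b c d.

Local Notation dl a b := ((a == b)%:R : _).

Section Main.
Variables (R : realType) (n s : nat) (v : 'I_s -> 'I_n -> R).
Local Notation nn := (n%:R : R).
Local Notation ss := (s%:R : R).
Definition tp (i j : 'I_s) : R := \sum_a v i a * v j a.
Hypothesis Hn : (3 <= n)%N.
Hypothesis Hu : forall i, \sum_a v i a ^+ 2 = 1.
Hypothesis H2 : \sum_i \sum_j tp i j ^+ 2 = ss ^+ 2 / nn.
Hypothesis H4 : \sum_i \sum_j tp i j ^+ 4 = 3 * ss ^+ 2 / (nn * (nn + 2)).

Definition c0 : R := ss / (nn * (nn + 2)).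

Lemma nn_gt0 : 0 < nn.
Proof. by rewrite ltr0n; apply: leq_trans Hn. Qed.

Lemma nn2_neq0 : nn * (nn + 2) != 0.
Proof. have := nn_gt0; rewrite mulf_eq0 negb_or => h; apply/andP; split; lra. Qed.

Lemma tpC i j : tp i j = tp j i.
Proof. by apply: eq_bigr => a _; rewrite mulrC. Qed.

Lemma tpii i : tp i i = 1.
Proof. by rewrite -(Hu i); apply: eq_bigr => a _; rewrite expr2. Qed.

Lemma sumM2 : \sum_a \sum_b (\sum_i v i a * v i b) ^+ 2 = \sum_i \sum_j tp i j ^+ 2.
Proof.
under eq_bigr => a _ do under eq_bigr => b _ do rewrite expr2 -prod2.
rewrite exch2; apply: eq_bigr => i _.
under eq_bigr => a _ do rewrite exchange_big /=.
rewrite exchange_big /=; apply: eq_bigr => j _.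
rewrite /tp expr2 -prod2; apply: eq_bigr => a _; apply: eq_bigr => b _; ring.
Qed.

Lemma T2 a b : \sum_i v i a * v i b = ss / nn * dl a b.
Proof.
apply/eqP; rewrite -subr_eq0; apply/eqP; move: a b.
apply: (sumsq2_eq0 (F := fun a b => (\sum_i v i a * v i b) - ss / nn * dl a b)).
rewrite expand2 sumM2 H2.
have -> : \sum_a \sum_b (\sum_i v i a * v i b) * dl a b = ss.
  under eq_bigr => a _ do rewrite sum_delta.
  rewrite exchange_big /=; transitivity (\sum_(i < s) (1 : R)); last first.
    by rewrite sumr_const card_ord.
  by apply: eq_bigr => i _; rewrite -(Hu i); apply: eq_bigr => a _; rewrite expr2.
have -> : \sum_(a < n) \sum_(b < n) (dl a b : R) ^+ 2 = nn.
  under eq_bigr => a _ do under eq_bigr => b _ do rewrite expr2.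
  under eq_bigr => a _ do rewrite sum_delta eqxx.
  by rewrite sumr_const card_ord.
have := nn_gt0; move=> h. field. lra.
Qed.
Definition T4 a b c d := \sum_i v i a * v i b * v i c * v i d.

Lemma sumT4sq : \sum_a \sum_b \sum_c \sum_d T4 a b c d ^+ 2 = \sum_i \sum_j tp i j ^+ 4.
Proof.
rewrite (@sum4_ext _ _ _ (fun a b c d => \sum_i \sum_j
   (v i a * v i b * v i c * v i d) * (v j a * v j b * v j c * v j d))); last first.
  by move=> a b c d; rewrite /T4 expr2 -prod2.
rewrite exch4; apply: eq_bigr => i _; rewrite exch4; apply: eq_bigr => j _.
rewrite (_ : tp i j ^+ 4 = tp i j * tp i j * tp i j * tp i j); last by ring.
rewrite /tp -prod4; apply: sum4_ext => a b c d; ring.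
Qed.

Lemma sumT4D : \sum_a \sum_b \sum_c \sum_d (T4 a b c d * D a b c d) = 3 * ss.
Proof.
rewrite (@sum4_ext _ _ _ (fun a b c d => \sum_i
   (v i a * v i b * v i c * v i d * D a b c d))); last first.
  by move=> a b c d; rewrite /T4 big_distrl.
rewrite exch4.
transitivity (\sum_(i < s) (3 : R)); last by rewrite sumr_const card_ord mulr_natr.
apply: eq_bigr => i _; rewrite contrD_fg Hu.
ring.
Qed.

Lemma T4E a b c d : T4 a b c d = c0 * D a b c d.
Proof.
apply/eqP; rewrite -subr_eq0; apply/eqP; move: a b c d.
apply: (sumsq4_eq0 (F := fun a b c d => T4 a b c d - c0 * D a b c d)).
rewrite expand4 sumT4sq H4 sumT4D sumDD /c0.
have h := nn_gt0. field. lra.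
Qed.

Lemma wcontr2 (u : 'I_s -> R) (f g : 'I_n -> R) :
  \sum_j u j * ((\sum_a f a * v j a) * (\sum_b g b * v j b)) =
  \sum_a \sum_b f a * g b * (\sum_j u j * (v j a * v j b)).
Proof.
transitivity (\sum_j \sum_a \sum_b u j * (f a * v j a) * (g b * v j b)).
  apply: eq_bigr => j _; rewrite -prod2 mulr_sumr; apply: eq_bigr => a _.
  by rewrite mulr_sumr; apply: eq_bigr => b _; ring.
rewrite -exch2; apply: eq_bigr => a _; apply: eq_bigr => b _.
by rewrite mulr_sumr; apply: eq_bigr => j _; ring.
Qed.

Lemma contr2 (f g : 'I_n -> R) :
  \sum_j (\sum_a f a * v j a) * (\sum_b g b * v j b) = ss / nn * \sum_a f a * g a.
Proof.
have := wcontr2 (fun _ => 1) f g.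
under eq_bigr => j _ do rewrite mul1r.
move=> ->.
rewrite mulr_sumr; apply: eq_bigr => a _.
under eq_bigr => b _ do (under eq_bigr => j _ do rewrite mul1r; rewrite T2 mulrA).
by rewrite sum_delta; ring.
Qed.

Lemma contr4 (f1 f2 f3 f4 : 'I_n -> R) :
  \sum_j (\sum_a f1 a * v j a) * (\sum_b f2 b * v j b) * (\sum_c f3 c * v j c)
        * (\sum_d f4 d * v j d) =
  c0 * ((\sum_a f1 a * f2 a) * (\sum_a f3 a * f4 a) + (\sum_a f1 a * f3 a) * (\sum_a f2 a * f4 a)
        + (\sum_a f1 a * f4 a) * (\sum_a f2 a * f3 a)).
Proof.
transitivity (\sum_j \sum_a \sum_b \sum_c \sum_d
   (f1 a * f2 b * f3 c * f4 d) * (v j a * v j b * v j c * v j d)).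
  by apply: eq_bigr => j _; rewrite -prod4; apply: sum4_ext => a b c d; ring.
rewrite -exch4.
rewrite (@sum4_ext _ _ _ (fun a b c d => c0 * ((f1 a * f2 b * f3 c * f4 d) * D a b c d))); last first.
  move=> a b c d; rewrite -big_distrr /= -/(T4 a b c d) T4E; ring.
rewrite sum4Z contrD; congr (_ * _).
congr (_ + _ + _).
- by rewrite -prod2; apply: eq_bigr => a _; apply: eq_bigr => c _; ring.
- by rewrite -prod2; apply: eq_bigr => a _; apply: eq_bigr => c _; ring.
- by rewrite -prod2; apply: eq_bigr => a _; apply: eq_bigr => c _; ring.
Qed.

Lemma vv1 i : \sum_a v i a * v i a = 1.
Proof. by rewrite -(Hu i); apply: eq_bigr => a _; rewrite expr2. Qed.

Lemma Qrow i : \sum_j tp i j ^+ 2 = ss / nn.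
Proof.
have := contr2 (v i) (v i); rewrite vv1 mulr1 => <-.
by apply: eq_bigr => j _; rewrite expr2.
Qed.

Lemma Q2 i k : \sum_j tp i j ^+ 2 * tp j k ^+ 2 = c0 * (1 + 2 * tp i k ^+ 2).
Proof.
have := contr4 (v i) (v i) (v k) (v k); rewrite !vv1 => E.
rewrite (_ : 1 + 2 * tp i k ^+ 2 = 1 * 1 + tp i k * tp i k + tp i k * tp i k); last by ring.
rewrite -E; apply: eq_bigr => j _; rewrite (tpC j k) /tp; ring.
Qed.

Variable w : 'I_s -> R.
Hypothesis hw : forall a b, \sum_i w i * (v i a * v i b) = 0.

Lemma Qw l : \sum_j w j * tp l j ^+ 2 = 0.
Proof.
rewrite (eq_bigr (fun j => w j * ((\sum_a v l a * v j a) * (\sum_b v l b * v j b)))); last first.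
  by move=> j _; rewrite expr2.
rewrite wcontr2 big1 // => a _; rewrite big1 // => b _; rewrite hw mulr0 //.
Qed.

Lemma sumw : \sum_j w j = 0.
Proof.
transitivity (\sum_j w j * \sum_a v j a * v j a).
  by apply: eq_bigr => j _; rewrite vv1 mulr1.
under eq_bigr => j _ do rewrite mulr_sumr.
by rewrite exchange_big /= big1 // => a _; rewrite hw.
Qed.

Lemma mixed rho k l :
  \sum_i (rho + w i) * (tp k i * tp i l) = rho * (ss / nn) * tp k l.
Proof.
have E : forall i, tp k i * tp i l = (\sum_a v k a * v i a) * (\sum_b v l b * v i b).
  by move=> i; rewrite (tpC i l).
have I : forall a b, \sum_j (rho + w j) * (v j a * v j b) = rho * (ss / nn * dl a b).
  move=> a b; rewrite (eq_bigr (fun j => rho * (v j a * v j b) + w j * (v j a * v j b))).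
    by rewrite big_split /= hw addr0 -mulr_sumr T2.
  by move=> j _; ring.
under eq_bigr => i _ do rewrite E.
rewrite (wcontr2 (fun i => rho + w i)).
rewrite /tp mulr_sumr; apply: eq_bigr => a _.
under eq_bigr => b _ do rewrite I.
transitivity (\sum_b (v k a * v l b * rho * (ss / nn)) * dl a b).
  by apply: eq_bigr => b _; ring.
by rewrite sum_delta; ring.
Qed.

Hypothesis Hs : ss = nn * (nn + 1) / 2 + 1.
Local Notation W := (\sum_j w j ^+ 2).
Hypothesis hW : W != 0.

Definition ee : R := (2 * c0)^-1.
Definition r k j := dl k j - ss^-1 - (tp k j ^+ 2 - nn^-1) * ee - (w k / W) * w j.

Lemma ss_gt0 : 0 < ss.
Proof. have := nn_gt0; rewrite Hs => h. have : 0 <= nn * (nn + 1) by apply: mulr_ge0; lra. lra. Qed.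

Lemma c0_gt0 : 0 < c0.
Proof. rewrite /c0; have := nn_gt0; have := ss_gt0 => h1 h2. apply: divr_gt0 => //. apply: mulr_gt0; lra. Qed.

Lemma nn_neq0 : nn != 0. Proof. by rewrite gt_eqF // nn_gt0. Qed.
Lemma nnp2_neq0 : nn + 2 != 0. Proof. by rewrite gt_eqF //; have := nn_gt0; lra. Qed.
Lemma nnm2_neq0 : nn - 2 != 0.
Proof. rewrite gt_eqF //; have : 3 <= nn by rewrite (ler_nat R 3 n). lra. Qed.
Lemma ss_neq0 : ss != 0. Proof. by rewrite gt_eqF // ss_gt0. Qed.
Lemma c0_neq0 : c0 != 0. Proof. by rewrite gt_eqF // c0_gt0. Qed.

Lemma r_sum k : \sum_j r k j = 0.
Proof.
transitivity (\sum_j 1 * r k j); first by apply: eq_bigr => j _; rewrite mul1r.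
rewrite /r sum_rw.
have E1 : \sum_j 1 * tp k j ^+ 2 = ss / nn by rewrite -(Qrow k); apply: eq_bigr => j _; rewrite mul1r.
have E2 : \sum_j 1 * w j = 0.
  by rewrite -[RHS]sumw; apply: eq_bigr => j _; rewrite mul1r.
rewrite E1 E2 sumr_const card_ord.
have h1 := ss_gt0. have h2 := nn_gt0.
rewrite -mulr_natr mul1r. field. by rewrite hW nn_neq0 ss_neq0.
Qed.

Lemma r_w k : \sum_j w j * r k j = 0.
Proof.
rewrite /r sum_rw sumw.
have E1 : \sum_j w j * tp k j ^+ 2 = 0 by apply: Qw.
have E2 : \sum_j w j * w j = W by apply: eq_bigr => j _; rewrite expr2.
rewrite E1 E2. field. by rewrite hW nn_neq0 ss_neq0.
Qed.

Lemma r_Q k : \sum_j tp k j ^+ 2 * r k j = 0.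
Proof.
rewrite /r sum_rw Qrow tpii.
have E1 : \sum_j tp k j ^+ 2 * tp k j ^+ 2 = c0 * 3.
  rewrite (eq_bigr (fun j => tp k j ^+ 2 * tp j k ^+ 2)); last by move=> j _; rewrite (tpC j k).
  by rewrite Q2 tpii; ring.
have E2 : \sum_j tp k j ^+ 2 * w j = 0.
  by rewrite -[RHS](Qw k); apply: eq_bigr => j _; rewrite mulrC.
rewrite E1 E2 /ee /c0. field. by rewrite hW nnp2_neq0 nn_neq0 ss_neq0.
Qed.

Lemma r_sq k : \sum_j r k j ^+ 2 = r k k.
Proof.
transitivity (\sum_j r k j * (dl k j - ss^-1 - (tp k j ^+ 2 - nn^-1) * ee - (w k / W) * w j)).
  by apply: eq_bigr => j _; rewrite expr2.
rewrite sum_rw r_sum.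
have E1 : \sum_j r k j * tp k j ^+ 2 = 0.
  by rewrite -[RHS](r_Q k); apply: eq_bigr => j _; rewrite mulrC.
have E2 : \sum_j r k j * w j = 0.
  by rewrite -[RHS](r_w k); apply: eq_bigr => j _; rewrite mulrC.
rewrite E1 E2; ring.
Qed.

Lemma sum_rkk : \sum_k r k k = 0.
Proof.
transitivity (\sum_(k < s) ((1 - ss^-1 - (1 - nn^-1) * ee) - W^-1 * w k ^+ 2)).
  by apply: eq_bigr => k _; rewrite /r eqxx tpii /=; ring.
rewrite sumrB -mulr_sumr sumr_const card_ord mulVf ?hW //.
have -> : forall x : R, x *+ s = x * ss by move=> x; rewrite mulr_natr.
have h1 := nn_gt0.
rewrite /ee /c0 Hs. field.
rewrite nn_neq0 nnp2_neq0 /=.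
rewrite gt_eqF //. have : 0 <= nn * (nn + 1) by apply: mulr_ge0; lra.
lra.
Qed.

Lemma r0 k j : r k j = 0.
Proof.
move: k j; apply: sumsq2_eq0.
by rewrite -[RHS]sum_rkk; apply: eq_bigr => k _; rewrite r_sq.
Qed.

Lemma ee_inv : ee^-1 = 2 * c0.
Proof. by rewrite /ee invrK. Qed.

Lemma wsq k : w k ^+ 2 = W / ss.
Proof.
have := r0 k k; rewrite /r eqxx tpii expr1n /= => E.
have E2 : w k / W * w k = 1 - ss^-1 - (1 - nn^-1) * ee.
  by apply/esym/eqP; rewrite -subr_eq0 E.
have h1 := nn_gt0.
have E3 : 1 - ss^-1 - (1 - nn^-1) * ee = ss^-1.
  rewrite /ee /c0 Hs; field. rewrite nn_neq0 nnp2_neq0 /= gt_eqF //.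
  have : 0 <= nn * (nn + 1) by apply: mulr_ge0; lra. lra.
rewrite E3 in E2.
rewrite (_ : w k ^+ 2 = W * (w k / W * w k)); last by field; rewrite hW.
by rewrite E2.
Qed.

Lemma tpsq k j : k != j -> tp k j ^+ 2 = nn^-1 - 2 * c0 * (ss^-1 + w k * w j / W).
Proof.
move=> hkj; have := r0 k j; rewrite /r (negbTE hkj) /= => E.
have hee : ee != 0 by rewrite /ee invr_eq0 mulf_neq0 ?c0_neq0 ?pnatr_eq0.
have -> : tp k j ^+ 2 = (nn^-1 - (ss^-1 + w k / W * w j) / ee)
   - (0 - ss^-1 - (tp k j ^+ 2 - nn^-1) * ee - w k / W * w j) / ee.
  by field; rewrite hee hW nn_neq0 ss_neq0.
rewrite E mul0r subr0 -ee_inv; field; by rewrite hee hW nn_neq0 ss_neq0.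
Qed.

Lemma final : False.
Proof.
have h1 := nn_gt0.
have hn3 : 3 <= nn by rewrite (ler_nat R 3 n).
have [k hk] : exists k, w k != 0.
  case: (pickP (fun k => w k != 0)) => [k hk|h]; first by exists k.
  move: hW; rewrite big1 ?eqxx // => i _.
  by move: (h i) => /negbFE /eqP ->; rewrite expr0n.
set rho := w k in hk.
have hpm : forall i, w i = rho \/ w i = - rho.
  move=> i; have : w i ^+ 2 == rho ^+ 2 by rewrite /rho !wsq.
  by rewrite eqf_sqr => /orP [/eqP|/eqP]; auto.
have [l hl] : exists l, w l = - rho.
  case: (pickP (fun l => w l == - rho)) => [l /eqP hl|h]; first by exists l.
  exfalso.
  have : \sum_j w j = \sum_(j < s) rho.
    apply: eq_bigr => i _; case: (hpm i) => // hi.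
    by move: (h i); rewrite hi eqxx.
  rewrite sumw sumr_const card_ord => /esym/eqP.
  by rewrite -mulr_natl mulf_eq0 (negbTE ss_neq0) (negbTE hk).
have hWs : rho ^+ 2 / W = ss^-1.
  by rewrite /rho wsq; field; rewrite hW ss_neq0.
have hnl : forall i, w i = rho -> i != l.
  move=> i hi; apply/eqP => e; move: hl; rewrite -e hi => /eqP.
  rewrite -subr_eq0 opprK => /eqP H.
  have : rho = 0 by lra.
  by move/eqP; rewrite (negbTE hk).
have hkl : k != l by apply: hnl.
pose al := nn^-1 - 4 * c0 / ss.
have Ha : al = (nn - 2) / (nn * (nn + 2)).
  rewrite /al /c0; field. by rewrite ss_neq0 nn_neq0 nnp2_neq0.
have al_gt0 : 0 < al.
  rewrite Ha; apply: divr_gt0; first lra.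
  by apply: mulr_gt0; lra.
have tkl : tp k l ^+ 2 = nn^-1.
  rewrite tpsq // hl -/rho.
  have -> : rho * - rho / W = - (rho ^+ 2 / W) by ring.
  rewrite hWs; ring.
have tki : forall i, i != k -> w i = rho -> tp k i ^+ 2 = al.
  move=> i hik hi; rewrite tpsq 1?eq_sym // hi -/rho.
  have -> : rho * rho / W = rho ^+ 2 / W by ring.
  rewrite hWs /al; ring.
have til : forall i, w i = rho -> tp i l ^+ 2 = nn^-1.
  move=> i hi; rewrite tpsq ?hnl // hi hl.
  have -> : rho * - rho / W = - (rho ^+ 2 / W) by ring.
  rewrite hWs; ring.
have tkl0 : tp k l != 0.
  apply/eqP => e; move: tkl; rewrite e expr0n /= => /esym/eqP.
  by rewrite invr_eq0 (negbTE nn_neq0).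
pose be := Num.sqrt al.
have be_gt0 : 0 < be by rewrite sqrtr_gt0.
have be2 : be ^+ 2 = al by rewrite sqr_sqrtr // ltW.
have be0 : be != 0 by rewrite gt_eqF.
pose a i := (rho + w i) * (tp k i * tp i l) / (2 * rho * tp k l).
have Hsum : \sum_i a i = ss / (2 * nn).
  rewrite /a -mulr_suml mixed; field.
  by rewrite tkl0 hk nn_neq0.
have Hak : a k = 1.
  rewrite /a tpii -/rho; field. by rewrite tkl0 hk.
have Hint : forall i, i != k -> a i / be \is a Num.int.
  move=> i hik; case: (hpm i) => hi.
  - have E : (a i / be) ^+ 2 == 1 ^+ 2.
      rewrite /a hi expr1n.
      have -> : ((rho + rho) * (tp k i * tp i l) / (2 * rho * tp k l) / be) ^+ 2
               = (tp k i ^+ 2 * tp i l ^+ 2) / (tp k l ^+ 2 * be ^+ 2).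
        by field; rewrite be0 tkl0 hk.
      rewrite tki // til // tkl be2; apply/eqP; field.
      by rewrite nn_neq0 gt_eqF.
    move: E; rewrite eqf_sqr => /orP [/eqP ->|/eqP ->].
      exact: rpred1.
    by rewrite rpredN rpred1.
  - by rewrite /a hi subrr !mul0r rpred0.
have Hz : \sum_(i | i != k) a i / be \is a Num.int.
  by apply: rpred_sum => i; exact: Hint.
have Ez : \sum_(i | i != k) a i / be = (ss / (2 * nn) - 1) / be.
  by rewrite -mulr_suml -Hsum [in RHS](bigD1 k) //= Hak; ring.
rewrite Ez in Hz.
case/intrP: Hz => zi Hzi.
have Z2 : zi%:~R ^+ 2 * al = (ss / (2 * nn) - 1) ^+ 2.
  by rewrite -Hzi -be2; field; rewrite nn_neq0 be0.
have Z3 : 16 * nn * zi%:~R ^+ 2 = (nn - 1) ^+ 2 * (nn - 2) * (nn + 2).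
  rewrite (_ : zi%:~R ^+ 2 = (zi%:~R ^+ 2 * al) * (nn * (nn + 2) / (nn - 2)) :> R); last first.
    by rewrite Ha; field; rewrite nnm2_neq0 nnp2_neq0 nn_neq0.
  by rewrite Z2 Hs; field; rewrite nnm2_neq0 nn_neq0.
apply: (@int_contra n zi Hn).
apply: (@intr_inj R).
rewrite !rmorphM !rmorphB !rmorphD /=.
move: Z3; rewrite !expr2 => Z3.
exact: Z3.
Qed.

End Main.

Definition Pty (n : nat) := {p : 'I_n * 'I_n | (p.2 <= p.1)%N}.

Lemma cardP n : #|{: Pty n}| = 'C(n.+1, 2).
Proof.
rewrite card_sig -sum1_card.
rewrite (_ : (\sum_(p in [pred p : 'I_n * 'I_n | (p.2 <= p.1)%N]) 1)%N =
   (\sum_(a < n) \sum_(b < n | (b <= a)%N) 1)%N); last first.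
  by rewrite pair_big_dep; apply: eq_bigl => p.
rewrite (eq_bigr (fun a : 'I_n => a.+1)); last first.
  move=> a _; rewrite big_mkcond /=.
  rewrite -(big_mkord xpredT (fun b => if (b <= a)%N then 1%N else 0%N)).
  rewrite (big_cat_nat _ (n := a.+1)) //=.
  rewrite [X in (_ + X)%N]big_nat_cond [X in (_ + X)%N]big1; last first.
    by move=> b /andP [/andP [hb _] _]; rewrite leqNgt hb.
  rewrite big_nat_cond (eq_bigr (fun _ => 1%N)); last first.
    by move=> b /andP [/andP [_ hb] _]; rewrite -ltnS hb.
  by rewrite -big_nat_cond sum_nat_const_nat subn0 muln1 addn0.
rewrite -bin2_sum big_nat_recl //= add0n big_mkord.
by [].
Qed.

Lemma kernel_exists (R : realType) n s (v : 'I_s -> 'I_n -> R) :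
  ('C(n.+1, 2) < s)%N ->
  exists w : 'I_s -> R, (forall a b, \sum_i w i * (v i a * v i b) = 0)
                        /\ \sum_j w j ^+ 2 != 0.
Proof.
move=> hs.
pose A : 'M[R]_(s, #|{: Pty n}|) :=
  \matrix_(i, p) (v i (val (enum_val p)).1 * v i (val (enum_val p)).2).
pose K := kermx A.
have hK : K != 0.
  apply/eqP => K0.
  have := mxrank_ker A; rewrite -/K K0 mxrank0.
  move=> h2.
  have h1 : (\rank A <= 'C(n.+1, 2))%N by rewrite -cardP; exact: rank_leq_col.
  move: hs; rewrite ltnNge => /negP; apply.
  have : (s - \rank A = 0)%N by rewrite h2.
  move/eqP; rewrite subn_eq0 => h3; exact: leq_trans h3 h1.
have [i0 hi0] : exists i0, row i0 K != 0.
  case: (pickP (fun i => row i K != 0)) => [i hi|h]; first by exists i.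
  exfalso; move/eqP: hK; apply; apply/row_matrixP => i; rewrite row0.
  by move: (h i) => /negbFE /eqP.
exists (fun j => K i0 j); split.
  move=> a b.
  have E : row i0 K *m A = 0 by rewrite -row_mul mulmx_ker row0.
  have key : forall p : 'I_#|{: Pty n}|, \sum_j K i0 j * (v j (val (enum_val p)).1 * v j (val (enum_val p)).2) = 0.
    move=> p; transitivity ((row i0 K *m A) 0 p); last by rewrite E mxE.
    by rewrite mxE; apply: eq_bigr => j _; rewrite !mxE.
  case: (leqP b a) => hab.
    by have := key (enum_rank (exist _ (a, b) hab : Pty n)); rewrite enum_rankK.
  have hba : (a <= b)%N by apply: ltnW.
  have := key (enum_rank (exist _ (b, a) hba : Pty n)); rewrite enum_rankK /= => H.
  by rewrite -[RHS]H; apply: eq_bigr => j _; rewrite (mulrC (v j b)).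
apply/negP => /eqP W0; move/eqP: hi0; apply; apply/rowP => j.
rewrite mxE [RHS]mxE; exact: (sumsq_eq0 W0 j).
Qed.


Lemma gegen2E (R : realType) n (t : R) : (3 <= n)%N ->
  gegen n 2 t = (n%:R / (n%:R - 1)) * t ^+ 2 + (- (n%:R - 1)^-1).
Proof.
move=> hn; have h3 : 3 <= (n%:R : R) by rewrite (ler_nat R 3 n).
rewrite /gegen /=. field.
rewrite !gt_eqF //; lra.
Qed.

Lemma gegen4E (R : realType) n (t : R) : (3 <= n)%N ->
  gegen n 4 t = ((n%:R + 2) * (n%:R + 4) / ((n%:R - 1) * (n%:R + 1))) * t ^+ 4
              + (- (6 * (n%:R + 2)) / ((n%:R - 1) * (n%:R + 1))) * t ^+ 2
              + 3 / ((n%:R - 1) * (n%:R + 1)).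
Proof.
move=> hn; have h3 : 3 <= (n%:R : R) by rewrite (ler_nat R 3 n).
rewrite /gegen /=. field.
rewrite !gt_eqF //; lra.
Qed.

From mathcomp Require Import zify.

Lemma bin2R (R : realType) n : ('C(n.+1, 2))%:R * 2 = (n%:R + 1) * n%:R :> R.
Proof.
have : ('C(n.+1, 2) * 2 = n.+1 * n)%N.
  elim: n => [|n IH]; first by [].
  rewrite binS bin1 mulnDl IH; nia.
move=> /(congr1 (fun k => k%:R : R)); rewrite !natrM => ->.
by rewrite -addn1 natrD.
Qed.

Lemma lin2 (R : realType) m (F : 'I_m -> 'I_m -> R) A B :
  \sum_i \sum_j (A * F i j + B) = A * (\sum_i \sum_j F i j) + B * m%:R ^+ 2.
Proof.
rewrite (eq_bigr (fun i => A * (\sum_j F i j) + B * m%:R)); last first.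
  by move=> i _; rewrite big_split /= -mulr_sumr sumr_const card_ord mulr_natr.
by rewrite big_split /= -mulr_sumr sumr_const card_ord -mulr_natr; ring.
Qed.

Lemma lin3 (R : realType) m (F G : 'I_m -> 'I_m -> R) A B C :
  \sum_i \sum_j (A * F i j + B * G i j + C) =
  A * (\sum_i \sum_j F i j) + B * (\sum_i \sum_j G i j) + C * m%:R ^+ 2.
Proof.
rewrite (eq_bigr (fun i => A * (\sum_j F i j) + B * (\sum_j G i j) + C * m%:R)); last first.
  by move=> i _; rewrite !big_split /= -!mulr_sumr sumr_const card_ord mulr_natr.
by rewrite !big_split /= -!mulr_sumr sumr_const card_ord -mulr_natr; ring.
Qed.



Theorem mainTheorem6 (R : realType) (n : nat) :
  (3 <= n)%N ->
  ~ exists C : seq 'rV[R]_n,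
      spherical22design C /\ size C = ('C(n.+1, 2) + 1)%N.
Proof.
move=> Hn [C [[_ _ Cunit S2 S4] Hsz]].
pose s := size C.
pose v (i : 'I_s) (a : 'I_n) := (nth 0 C i) 0 a.
have h3 : (3 <= (n%:R : R))%R by rewrite (ler_nat R 3 n).
have Hu : forall i, (\sum_a v i a ^+ 2 = 1)%R.
  move=> i; have := Cunit _ (mem_nth 0 (ltn_ord i)); rewrite /inner => <-.
  by apply: eq_bigr => a _; rewrite expr2.
have bc : forall F : 'rV[R]_n -> 'rV[R]_n -> R,
    (\sum_(x <- C) \sum_(y <- C) F x y = \sum_(i < s) \sum_(j < s) F (nth 0 C i) (nth 0 C j))%R.
  move=> F; rewrite (big_nth 0) big_mkord; apply: eq_bigr => i _.
  by rewrite (big_nth 0) big_mkord.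
set nn := (n%:R : R). set ss := (s%:R : R).
have nn1 : (nn - 1 != 0)%R by rewrite gt_eqF //; lra.
have nn0 : (nn != 0)%R by rewrite gt_eqF //; lra.
have nnp1 : (nn + 1 != 0)%R by rewrite gt_eqF //; lra.
have nnp2 : (nn + 2 != 0)%R by rewrite gt_eqF //; lra.
have nnp4 : (nn + 4 != 0)%R by rewrite gt_eqF //; lra.
have H2 : (\sum_i \sum_j tp v i j ^+ 2 = ss ^+ 2 / nn)%R.
  have e : ((nn / (nn - 1)) * (\sum_i \sum_j tp v i j ^+ 2) + (- (nn - 1)^-1) * ss ^+ 2 = 0)%R.
    rewrite -lin2 -[RHS]S2 bc; apply: eq_bigr => i _; apply: eq_bigr => j _.
    by rewrite gegen2E.
  set X := (\sum_i \sum_j tp v i j ^+ 2)%R in e *.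
  rewrite (_ : X = ss ^+ 2 / nn + (nn - 1) / nn *
     ((nn / (nn - 1)) * X + (- (nn - 1)^-1) * ss ^+ 2))%R; last by field; rewrite nn1 nn0.
  by rewrite e mulr0 addr0.
have H4 : (\sum_i \sum_j tp v i j ^+ 4 = 3 * ss ^+ 2 / (nn * (nn + 2)))%R.
  have e : (((nn + 2) * (nn + 4) / ((nn - 1) * (nn + 1))) * (\sum_i \sum_j tp v i j ^+ 4)
        + (- (6 * (nn + 2)) / ((nn - 1) * (nn + 1))) * (\sum_i \sum_j tp v i j ^+ 2)
        + 3 / ((nn - 1) * (nn + 1)) * ss ^+ 2 = 0)%R.
    rewrite -lin3 -[RHS]S4 bc; apply: eq_bigr => i _; apply: eq_bigr => j _.
    by rewrite gegen4E.
  rewrite H2 in e.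
  set X := (\sum_i \sum_j tp v i j ^+ 4)%R in e *.
  set A4 := ((nn + 2) * (nn + 4) / ((nn - 1) * (nn + 1)))%R in e.
  set B := ((- (6 * (nn + 2)) / ((nn - 1) * (nn + 1))) * (ss ^+ 2 / nn))%R in e.
  set Cc := (3 / ((nn - 1) * (nn + 1)) * ss ^+ 2)%R in e.
  have hA4 : (A4 != 0)%R by rewrite /A4 mulf_neq0 ?invr_eq0 ?mulf_neq0.
  rewrite (_ : X = (A4 * X + B + Cc) / A4 - (B + Cc) / A4)%R; last by field.
  rewrite e mul0r add0r /B /Cc /A4; field.
  by rewrite nn1 nnp1 nnp2 nnp4 nn0.
have Hs : (ss = nn * (nn + 1) / 2 + 1)%R.
  have hb := bin2R R n; rewrite -/nn in hb.
  rewrite /ss /s Hsz natrD.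
  rewrite (_ : ('C(n.+1, 2))%:R = (('C(n.+1, 2))%:R * 2) / 2 :> R)%R; last by field.
  by rewrite hb; field.
have [w [hw hW]] := @kernel_exists R n s v
  ltac:(by rewrite /s Hsz addn1 ltnSn).
exact: (final Hn Hu H2 H4 hw Hs hW).
Qed.
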